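(* The functionally independent Casimir invariants of the Lie algebra $\mathfrak{g}_{n}$ are the linear central elements $z_{i,j}$ ($1\leq i\leq j\leq n-2$) and the $n$th degree polynomial $C_{n}=-\det(M_n)$, where $M_n$ is the $n\times n$ symmetric matrix with coefficients in $\mathfrak{g}_n$ \begin{equation*} M_n:=\begin{pmatrix} z_{1,1} & \cdots & z_{1,n-2} & -y_{1,-} & y_{1,+} \\ \vdots & \ddots & \vdots & \vdots & \vdots \\ z_{1,n-2} & \cdots & z_{n-2,n-2} & -y_{n-2,-} & y_{n-2,+} \\ -y_{1,-} & \cdots & -y_{n-2,-} & -2x_{-} & h \\ y_{1,+} & \cdots & y_{n-2,+} & h & 2x_{+} \end{pmatrix}. \end{equation*}
   Context: For $n\geq 2$, $\mathfrak{g}_n$ is the $n(n+1)/2$-dimensional Lie algebra over $\mathbb{K}$ ($\mathbb{R}$ or $\mathbb{C}$) with basis $h,x_-,x_+$, $y_{i,\pm}$ ($i=1,\dots,n-2$), $z_{i,j}$ ($1\le i\le j\le n-2$), and commutation relations $[x_+,x_-]=h$, $[h,x_\pm]=\pm 2x_\pm$, $[h,y_{i,\pm}]=\pm y_{i,\pm}$, $[x_-,y_{i,-}]=[x_+,y_{i,+}]=0$, $[x_-,y_{i,+}]=y_{i,-}$, $[x_+,y_{i,-}]=y_{i,+}$, $[y_{i,+},y_{j,+}]=[y_{i,-},y_{j,-}]=0$, $[y_{i,+},y_{j,-}]=z_{\min(i,j),\max(i,j)}$, and the $z_{i,j}$ are central. A (polynomial) Casimir element is an element $C$ of the symmetric algebra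 $S\mathfrak{g}_n\cong\mathbb{K}[h,x_-,x_+,\dots,z_{n-2,n-2}]$ (with the Lie–Poisson bracket induced by the Lie bracket) annihilated by the adjoint action of $\mathfrak{g}_n$ extended by derivations, i.e. $\{C,x\}=0$ for all $x\in\mathfrak{g}_n$. It was shown earlier (via the Beltrametti–Blasi formula) that $\mathfrak{g}_n$ has exactly $n(n-1)/2\cdot$—more precisely $(n-1)(n-2)/2+1$—functionally independent Casimir invariants, of which $(n-1)(n-2)/2$ are the central elements $z_{i,j}$. *)

(* Defs.v *)
From HB Require Import structures.
From mathcomp Require Import all_boot all_order all_algebra.
From mathcomp Require Import mpoly.

Set Implicit Arguments.
Unset Strict Implicit.
Unset Printing Implicit Defensive.

Import Order.TTheory GRing.Theory Num.Theory.
Local Open Scope ring_scope.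

(* Throughout, m stands for n - 2. *)

(* index set of the central elements z_{i,j}, 1 <= i <= j <= m
   (0-based here: i <= j in 'I_m) *)
Definition zidx (m : nat) := {p : 'I_m * 'I_m | (p.1 <= p.2)%N}.

Inductive gb (m : nat) : Type :=
  | Gh | Gxm | Gxp | Gym of 'I_m | Gyp of 'I_m | Gz of zidx m.
Arguments Gh {m}. Arguments Gxm {m}. Arguments Gxp {m}.

Definition gb_enc m (b : gb m) : (unit + unit + unit) + ('I_m + 'I_m) + zidx m :=
  match b with
  | Gh => inl (inl (inl (inl tt)))
  | Gxm => inl (inl (inl (inr tt)))
  | Gxp => inl (inl (inr tt))
  | Gym i => inl (inr (inl i))
  | Gyp i => inl (inr (inr i))
  | Gz z => inr z
  end.
Definition gb_dec m (s : (unit + unit + unit) + ('I_m + 'I_m) + zidx m) : gb m :=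
  match s with
  | inl (inl (inl (inl _))) => Gh
  | inl (inl (inl (inr _))) => Gxm
  | inl (inl (inr _)) => Gxp
  | inl (inr (inl i)) => Gym i
  | inl (inr (inr i)) => Gyp i
  | inr z => Gz z
  end.
Lemma gb_encK m : cancel (@gb_enc m) (@gb_dec m).
Proof. by case. Qed.
HB.instance Definition _ m := Finite.copy (gb m) (can_type (@gb_encK m)).

(* dimension of g_n (= n(n+1)/2) and the symmetric algebra S(g_n) *)
Definition gdim (m : nat) := #|{: gb m}|.
Definition Sg (K : numFieldType) (m : nat) := {mpoly K[gdim m]}.

Definition X (K : numFieldType) m (b : gb m) : Sg K m := 'X_(enum_rank b).

Lemma zof_subproof m (i j : 'I_m) :
  ((if (i <= j)%N then (i, j) else (j, i)).1 <= (if (i <= j)%N then (i, j) else (j, i)).2)%N.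
Proof. by case: ifP => //= /negbT; rewrite -ltnNge => /ltnW. Qed.
Definition zof m (i j : 'I_m) : zidx m :=
  exist _ (if (i <= j)%N then (i, j) else (j, i)) (zof_subproof i j).

Definition br (K : numFieldType) m (a b : gb m) : Sg K m :=
  match a, b with
  | Gxp, Gxm => X K Gh
  | Gxm, Gxp => - X K Gh
  | Gh, Gxp => 2%:R * X K Gxp
  | Gxp, Gh => - (2%:R * X K Gxp)
  | Gh, Gxm => - (2%:R * X K Gxm)
  | Gxm, Gh => 2%:R * X K Gxm
  | Gh, Gyp i => X K (Gyp i)
  | Gyp i, Gh => - X K (Gyp i)
  | Gh, Gym i => - X K (Gym i)
  | Gym i, Gh => X K (Gym i)
  | Gxm, Gyp i => X K (Gym i)
  | Gyp i, Gxm => - X K (Gym i)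
  | Gxp, Gym i => X K (Gyp i)
  | Gym i, Gxp => - X K (Gyp i)
  | Gyp i, Gym j => X K (Gz (zof i j))
  | Gym j, Gyp i => - X K (Gz (zof i j))
  | _, _ => 0
  end.

Definition pbr (K : numFieldType) m (f g : Sg K m) : Sg K m :=
  \sum_(a : gb m) \sum_(b : gb m)
     (mderiv (enum_rank a) f * mderiv (enum_rank b) g * br K a b).

Definition casimir (K : numFieldType) m (C : Sg K m) : Prop :=
  forall x : gb m, pbr C (X K x) = 0.

Definition jacobian (K : numFieldType) m (I : finType) (F : I -> Sg K m)
    (v : 'I_(gdim m) -> K) : 'M[K]_(#|I|, gdim m) :=
  \matrix_(i < #|I|, j < gdim m) (mderiv j (F (enum_val i))).@[v].

(* functional independence: the Jacobian has full rank #|I| (at some point,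
   equivalently on a Zariski-dense open set) *)
Definition func_indep (K : numFieldType) m (I : finType) (F : I -> Sg K m) : Prop :=
  exists v : 'I_(gdim m) -> K, row_free (jacobian F v).

Definition Mmat (K : numFieldType) m : 'M[Sg K m]_(m + 2) :=
  \matrix_(i, j)
    match split i, split j with
    | inl a, inl b => X K (Gz (zof a b))
    | inl a, inr t => if val t == 0%N then - X K (Gym a) else X K (Gyp a)
    | inr s, inl b => if val s == 0%N then - X K (Gym b) else X K (Gyp b)
    | inr s, inr t =>
        if (val s == 0%N) && (val t == 0%N) then - (2%:R * X K Gxm)
        else if (val s == 1%N) && (val t == 1%N) then 2%:R * X K Gxp
        else X K Gh
    end.

Definition Cn (K : numFieldType) m : Sg K m := - \det (Mmat K m).

Definition casimir_family (K : numFieldType) m (o : option (zidx m)) : Sg K m :=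
  match o with None => Cn K m | Some z => X K (Gz z) end.

Definition extend_family (K : numFieldType) m (C : Sg K m)
    (o : option (option (zidx m))) : Sg K m :=
  match o with None => C | Some o' => @casimir_family K m o' end.

(* Main.v *)
Require Import Defs.
From HB Require Import structures.
From mathcomp Require Import all_boot all_order all_algebra.
From mathcomp Require Import mpoly.
From mathcomp Require Import perm ring zify.
Set Implicit Arguments.
Unset Strict Implicit.
Unset Printing Implicit Defensive.
Import Order.TTheory GRing.Theory Num.Theory.
Local Open Scope ring_scope.


Section Deriv.
Variables (R : comRingType) (D : R -> R).
Hypothesis DD : forall x y, D (x + y) = D x + D y.
Hypothesis DM : forall x y, D (x * y) = D x * y + x * D y.

Lemma D0 : D 0 = 0.
Proof. by apply: (addrI (D 0)); rewrite addr0 -DD addr0. Qed.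
Lemma DN x : D (- x) = - D x.
Proof. by apply: (addrI (D x)); rewrite -DD !subrr D0. Qed.
Lemma D1 : D 1 = 0.
Proof. have h := DM 1 1; rewrite !mulr1 !mul1r in h.
by apply: (addrI (D 1)); rewrite addr0 -h. Qed.
Lemma Dsign k : D ((-1) ^+ k) = 0.
Proof. elim: k => [|k IH]; first by rewrite expr0 D1.
by rewrite exprS DM IH DN D1 oppr0 !(mul0r, mulr0, addr0). Qed.
Lemma Dnat k : D (k%:R) = 0.
Proof. elim: k => [|k IH]; first by rewrite D0.
by rewrite mulrS DD IH D1 addr0. Qed.
Lemma Dsum (I : Type) (r : seq I) (P : pred I) F :
  D (\sum_(i <- r | P i) F i) = \sum_(i <- r | P i) D (F i).
Proof. exact: (big_morph D DD D0). Qed.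

Lemma Dprod (I : eqType) (r : seq I) F : uniq r ->
  D (\prod_(i <- r) F i) = \sum_(i <- r) D (F i) * \prod_(k <- r | k != i) F k.
Proof.
elim: r => [|a r IH] /=; first by rewrite !big_nil D1.
case/andP=> nar ur; rewrite !big_cons DM IH // eqxx /=.
congr (_ + _).
  congr (_ * _); rewrite -[RHS]big_filter.
  suff -> : [seq k <- r | k != a] = r by [].
  apply/all_filterP.
  by apply/allP => k kr /=; apply: contraNneq nar => <-.
rewrite big_distrr /= !big_seq; apply: eq_bigr => i ir.
rewrite big_cons. have -> : (a != i) = true by apply/negP => /eqP ai; move: nar; rewrite ai ir.
by rewrite mulrCA.
Qed.

Lemma D_det n (A : 'M[R]_n) :
  D (\det A) = \sum_i \sum_j D (A i j) * cofactor A i j.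
Proof.
rewrite /determinant Dsum.
under eq_bigr => s _ do rewrite DM Dsign mul0r add0r (Dprod _ (index_enum_uniq _)) big_distrr.
rewrite exchange_big /=; apply: eq_bigr => i _.
under [RHS]eq_bigr => j _ do rewrite expand_cofactor big_distrr.
rewrite (exchange_big_dep predT) //=; apply: eq_bigr => s _.
rewrite [RHS](big_pred1 (s i)); last by move=> j; rewrite /= eq_sym.
rewrite mulrCA; congr (_ * (_ * _)).
by apply: eq_bigl => k; rewrite eq_sym.
Qed.
End Deriv.


Lemma mderivXU (K : comRingType) n (i j : 'I_n) :
  mderiv j ('X_i : {mpoly K[n]}) = (i == j)%:R.
Proof.
rewrite mderivX mnm1E; case: eqP => [->|_]; last by rewrite scale0r.
rewrite scale1r (_ : (U_(j) - U_(j))%MM = 0%MM) ?mpolyX0 //.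
by apply/mnmP => k; rewrite mnmBE subnn mnm0E.
Qed.

Section G.
Variables (K : numFieldType) (m : nat).
Local Notation R := (Sg K m).
Local Notation XX := (@X K m).

Definition Dx (x : gb m) (f : R) : R :=
  \sum_(a : gb m) mderiv (enum_rank a) f * br K a x.

Lemma DxD x f g : Dx x (f + g) = Dx x f + Dx x g.
Proof. by rewrite /Dx -big_split; apply: eq_bigr => a _; rewrite mderivD mulrDl. Qed.
Lemma DxM x f g : Dx x (f * g) = Dx x f * g + f * Dx x g.
Proof.
rewrite /Dx big_distrl big_distrr -big_split; apply: eq_bigr => a _ /=.
by rewrite mderivM; ring.
Qed.

Lemma DxX b x : Dx x (XX b) = br K b x.
Proof.
rewrite /Dx /X; under eq_bigr => a _ do rewrite mderivXU.
rewrite (bigD1 b) //= eqxx mul1r big1 ?addr0 // => a nab.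
by rewrite (inj_eq enum_rank_inj) eq_sym (negbTE nab) mul0r.
Qed.

Lemma pbrX C x : pbr C (XX x) = Dx x C.
Proof.
rewrite /pbr /Dx; apply: eq_bigr => a _; rewrite (bigD1 x) //= {1}/X mderivXU eqxx mulr1.
rewrite big1 ?addr0 // => b nb.
by rewrite /X mderivXU (inj_eq enum_rank_inj) eq_sym (negbTE nb) mulr0 mul0r.
Qed.

Lemma casimir_z (z : zidx m) : casimir (XX (Gz z)).
Proof. by move=> x; rewrite pbrX DxX; case: x. Qed.

Lemma DxN x f : Dx x (- f) = - Dx x f.
Proof. exact: (DN (DxD x)). Qed.
Lemma Dx2 x f : Dx x (2%:R * f) = 2%:R * Dx x f.
Proof. by rewrite DxM (Dnat (DxD x) (DxM x)) mul0r add0r. Qed.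

End G.


Lemma trace_cof (R : comRingType) n (A M : 'M[R]_n) : \tr A = 0 ->
  \sum_i \sum_j (A *m M + M *m A^T) i j * cofactor M i j = 0.
Proof.
move=> trA.
have -> : \sum_i \sum_j (A *m M + M *m A^T) i j * cofactor M i j =
   \tr ((A *m M + M *m A^T) *m \adj M).
  rewrite /mxtrace; apply: eq_bigr => i _; rewrite mxE; apply: eq_bigr => j _.
  by rewrite [\adj M j i]mxE.
rewrite mulmxDl mxtraceD -mulmxA mul_mx_adj mul_mx_scalar mxtraceZ trA mulr0 add0r.
by rewrite -mulmxA mxtrace_mulC -mulmxA mul_adj_mx mul_mx_scalar mxtraceZ mxtrace_tr trA mulr0.
Qed.

Lemma mul_delta_l (R : ringType) n (p q : 'I_n) (M : 'M[R]_n) i j :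
  (delta_mx p q *m M) i j = (i == p)%:R * M q j.
Proof.
rewrite mxE (bigD1 q) //= mxE eqxx andbT big1 ?addr0 // => k nk.
by rewrite mxE (negbTE nk) andbF mul0r.
Qed.

Lemma mul_delta_r (R : ringType) n (p q : 'I_n) (M : 'M[R]_n) i j :
  (M *m (delta_mx p q)^T) i j = M i q * (j == p)%:R.
Proof.
rewrite mxE (bigD1 q) //= !mxE eqxx andbT big1 ?addr0 // => k nk.
by rewrite !mxE (negbTE nk) andbF mulr0.
Qed.

Lemma mxE_add (R : nmodType) p q (A B : 'M[R]_(p,q)) i j : (A + B) i j = A i j + B i j.
Proof. by rewrite mxE. Qed.
Lemma mxE_opp (R : zmodType) p q (A : 'M[R]_(p,q)) i j : (- A) i j = - A i j.
Proof. by rewrite mxE. Qed.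

Lemma zofC m (i j : 'I_m) : zof i j = zof j i.
Proof.
apply: val_inj => /=; case: (ltngtP i j) => [lt|lt|/val_inj ->] //.
Qed.

Section E.
Variables (K : numFieldType) (m : nat).
Local Notation R := (Sg K m).
Local Notation XX := (@X K m).
Local Notation M := (Mmat K m).

Definition im : 'I_(m+2) := rshift m (@ord0 1).
Definition ip : 'I_(m+2) := rshift m (@ord_max 1).

Definition Ax (x : gb m) : 'M[R]_(m+2) :=
  match x with
  | Gh => delta_mx im im - delta_mx ip ip
  | Gxm => delta_mx ip im
  | Gxp => delta_mx im ip
  | Gym k => delta_mx ip (lshift 2 k)
  | Gyp k => delta_mx im (lshift 2 k)
  | Gz _ => 0
  end.

Lemma tr_delta (p q : 'I_(m+2)) : \tr (delta_mx p q : 'M[R]_(m+2)) = (p == q)%:R.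
Proof.
rewrite /mxtrace (bigD1 p) //= mxE eqxx /= big1 ?addr0 // => i nip.
by rewrite mxE (negbTE nip).
Qed.

Lemma trAx x : \tr (Ax x) = 0.
Proof.
case: x => [||| k | k | z] /=; rewrite ?raddfB /= ?tr_delta ?mxtrace0 ?eqxx ?subrr //.
all: rewrite -val_eqE /= ?eqn_add2l //.
all: by rewrite (gtn_eqF (ltn_addr _ (ltn_ord k))).
Qed.

Lemma split_l a : split (lshift 2 a) = inl a :> ('I_m + 'I_2).
Proof. exact: (unsplitK (inl a)). Qed.
Lemma split_r s : split (rshift m s) = inr s :> ('I_m + 'I_2).
Proof. exact: (unsplitK (inr s)). Qed.
Lemma eq_ll a b : (lshift 2 a == lshift 2 b :> 'I_(m+2)) = (a == b).
Proof. by apply/eqP/eqP => [h|->] //; apply: val_inj; exact: (congr1 val h). Qed.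
Lemma eq_lr a s : (lshift 2 a == rshift m s :> 'I_(m+2)) = false.
Proof. by apply/negbTE; rewrite -val_eqE /= neq_ltn (ltn_addr _ (ltn_ord a)). Qed.
Lemma eq_rl a s : (rshift m s == lshift 2 a :> 'I_(m+2)) = false.
Proof. by rewrite eq_sym eq_lr. Qed.
Lemma eq_rr s t : (rshift m s == rshift m t :> 'I_(m+2)) = (s == t).
Proof. apply/eqP/eqP => [h|->] //; apply: val_inj; have := congr1 val h; rewrite /=; exact: addnI. Qed.

Lemma ordP (P : 'I_(m+2) -> Prop) :
  (forall a, P (lshift 2 a)) -> P im -> P ip -> forall i, P i.
Proof.
move=> Hl H0 H1 i; rewrite -(splitK i); case: (split i) => [a|s] /=; first exact: Hl.
case: s => [[|[|s]] Hs] //.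
- by rewrite (_ : Ordinal Hs = ord0) //; apply: val_inj.
- by rewrite (_ : Ordinal Hs = ord_max) //; apply: val_inj.
Qed.

Lemma Dx_entry x i j :
  Dx x (M i j) = (Ax x *m M + M *m (Ax x)^T) i j.
Proof.
rewrite mxE_add.
case: x => [||| k | k | z] /=;
  rewrite ?(mulmxBl, linearB, mulmxBr, mul0mx, trmx0, mulmx0) /=
          ?(mxE_add, mxE_opp) ?mul_delta_l ?mul_delta_r.
all: move: i j; apply: ordP => [a||]; apply: ordP => [b||].
all: rewrite /im /ip ?eq_ll ?eq_lr ?eq_rl ?eq_rr /= !mxE ?split_l ?split_r /=.
all: rewrite ?(DxN, Dx2, DxX) /=.
all: try ring.
all: by rewrite zofC; ring.
Qed.
End E.


Lemma sum_delta_l (R : semiRingType) (T : finType) (a : T) (F : T -> R) :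
  \sum_(j : T) (a == j)%:R * F j = F a.
Proof.
rewrite (bigD1 a) //= eqxx mul1r big1 ?addr0 // => j nja.
by rewrite eq_sym (negbTE nja) mul0r.
Qed.
Lemma sum_delta_r (R : semiRingType) (T : finType) (a : T) (F : T -> R) :
  \sum_(j : T) F j * (j == a)%:R = F a.
Proof.
rewrite (bigD1 a) //= eqxx mulr1 big1 ?addr0 // => j nja.
by rewrite (negbTE nja) mulr0.
Qed.

Section F.
Variables (K : numFieldType) (m : nat).
Local Notation R := (Sg K m).
Local Notation XX := (@X K m).
Local Notation M := (Mmat K m).

Lemma casimir_Cn : casimir (Cn K m).
Proof.
move=> x; rewrite pbrX /Cn DxN (D_det (DxD x) (DxM x)).
under eq_bigr => i _ do under eq_bigr => j _ do rewrite Dx_entry.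
by rewrite trace_cof ?trAx ?oppr0.
Qed.

Definition v3 (k : 'I_(gdim m)) : K :=
  match enum_val (k : 'I_#|{: gb m}|) with
  | Gz z => if (sval z).1 == (sval z).2 then 1 else 0
  | Gxm => - 2%:R^-1
  | Gxp => 2%:R^-1
  | _ => 0
  end.

Lemma v3X b : (XX b).@[v3] = v3 (enum_rank b).
Proof. by rewrite /X mevalXU. Qed.

Lemma Mv3 : map_mx (meval v3) M = 1%:M.
Proof.
have h2 : (2%:R : K) != 0 by rewrite pnatr_eq0.
apply/matrixP => i j; rewrite !mxE; move: i j.
apply: ordP => [a||]; apply: ordP => [b||].
all: rewrite /im /ip ?eq_ll ?eq_lr ?eq_rl ?eq_rr /= ?split_l ?split_r /=.
all: rewrite ?(rmorphN, rmorphM, rmorph_nat) /X.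
all: rewrite /v3 ?mevalXU ?enum_rankK /= ?oppr0 //.
- by case: leqP => _ /=; [|rewrite eq_sym]; case: eqP.
all: rewrite mevalXU enum_rankK /= ?oppr0 //.
- by rewrite mulrN opprK divff.
- by rewrite divff.
Qed.

Lemma meval_cof n (v : 'I_(gdim m) -> K) (A : 'M[R]_n) i j :
  (cofactor A i j).@[v] = cofactor (map_mx (meval v) A) i j.
Proof.
have := congr1 (fun B : 'M[K]_n => B j i) (map_mx_adj (meval v) A).
by rewrite /= !mxE.
Qed.

Lemma cof1 n (i k : 'I_n) : cofactor (1%:M : 'M[K]_n) i k = (k == i)%:R.
Proof.
have := congr1 (fun B : 'M[K]_n => B k i) (adj1 K n).
by rewrite /= !mxE.
Qed.

Definition g3 (j : 'I_(gdim m)) : K := (mderiv j (Cn K m)).@[v3].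

Lemma g3E j : g3 j = - \sum_i (mderiv j (M i i)).@[v3].
Proof.
rewrite /g3 /Cn mderivN (D_det (mderivD j) (mderivM j)) mevalN.
rewrite (big_morph _ (mevalD v3) (meval0 v3)).
congr (- _); apply: eq_bigr => i _; rewrite (big_morph _ (mevalD v3) (meval0 v3)).
under eq_bigr => k _ do rewrite mevalM meval_cof Mv3 cof1.
by rewrite sum_delta_r.
Qed.

Lemma g3xp : g3 (enum_rank Gxp) = - 2%:R.
Proof.
rewrite g3E; congr (- _).
have h : forall i, (mderiv (enum_rank Gxp) (M i i)).@[v3] = (ip m == i)%:R * 2%:R.
  { apply: ordP => [a||]; rewrite !mxE ?split_l ?split_r /=.
  all: rewrite /ip /im ?eq_rl ?eq_rr ?eqxx /=.
  all: rewrite ?mderivN ?mderivM ?(Dnat (mderivD _) (mderivM _)) /X ?mderivXU ?(inj_eq enum_rank_inj) /=.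
  all: by rewrite ?(mul0r, mulr0, add0r, oppr0, meval0, mulr1, mul1r) -?mpolyC_nat ?mevalC. }
by rewrite (eq_bigr _ (fun i _ => h i)) sum_delta_l.
Qed.

Lemma indep : func_indep (@casimir_family K m).
Proof.
exists v3; apply/row_freeP.
pose c := g3 (enum_rank Gxp).
have c0 : c != 0 by rewrite /c g3xp oppr_eq0 pnatr_eq0.
exists (\matrix_(j, r) match enum_val r with
   | None => (j == enum_rank Gxp)%:R / c
   | Some z => (j == enum_rank (Gz z))%:R - g3 (enum_rank (Gz z)) / c * (j == enum_rank Gxp)%:R
   end).
apply/matrixP => r s; rewrite !mxE.
under eq_bigr => j _ do rewrite !mxE.
have rs : (r == s) = (enum_val r == enum_val s) by rewrite (inj_eq enum_val_inj).
rewrite rs; case er: (enum_val r) => [z'|]; case es: (enum_val s) => [z|] /=.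
- under eq_bigr => j _ do rewrite /X mderivXU -mpolyC_nat mevalC.
  have Ginj : injective (@Gz m) by move=> ? ? [].
  by rewrite sum_delta_l !(inj_eq enum_rank_inj) /= mulr0 subr0 (inj_eq Ginj).
- under eq_bigr => j _ do rewrite /X mderivXU -mpolyC_nat mevalC.
  by rewrite sum_delta_l !(inj_eq enum_rank_inj) /= mul0r.
- under eq_bigr => j _ do rewrite -/(g3 j) mulrBr mulrA.
  rewrite sumrB !sum_delta_r /c; field.
  by rewrite -/c.
- under eq_bigr => j _ do rewrite -/(g3 j) mulrCA mulrC.
  by rewrite sum_delta_r divff.
Qed.

End F.


Lemma rank_spec (K : fieldType) k p q (A : 'M[{mpoly K[k]}]_(p,q)) (v : 'I_k -> K) :
  (\rank (map_mx (meval v) A) <= \rank (map_mx (@FracField.tofrac _) A))%N.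
Proof.
set A1 := map_mx (meval v) A; set r := \rank A1.
set CE := col_ebase A1; set RE := row_ebase A1.
have E : CE *m pid_mx r *m RE = A1 by exact: mulmx_ebase.
pose L1 : 'M[K]_(r, p) := pid_mx r *m invmx CE.
pose R1 : 'M[K]_(q, r) := invmx RE *m pid_mx r.
have e1 : L1 *m A1 *m R1 = 1%:M.
  rewrite /L1 /R1 -E !mulmxA (mulmxKV (col_ebase_unit _)) (mulmxK (row_ebase_unit _)).
  by rewrite pid_mx_id ?rank_leq_row // pid_mx_id ?rank_leq_col // pid_mx_1.
pose T := map_mx (@mpolyC k K) L1 *m A *m map_mx (@mpolyC k K) R1.
have mC : forall p' q' (B : 'M[K]_(p', q')), map_mx (meval v) (map_mx (@mpolyC k K) B) = B.
  by move=> p' q' B; apply/matrixP => i j; rewrite !mxE mevalC.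
have eT : map_mx (meval v) T = 1%:M by rewrite /T !map_mxM !mC.
have dT : \det T != 0.
  apply/eqP => h; have := congr1 (meval v) h.
  rewrite meval0 -det_map_mx eT det1 => /eqP; by rewrite oner_eq0.
have uT : map_mx (@FracField.tofrac _) T \in unitmx.
  by rewrite unitmxE det_map_mx unitfE tofrac_eq0.
have := mxrank_unit uT; rewrite /T !map_mxM => rT.
rewrite -[X in (X <= _)%N]rT.
apply: leq_trans (mxrankM_maxl _ _) _; exact: mxrankM_maxr.
Qed.

Section H.
Variables (K : numFieldType) (m : nat).
Local Notation R := (Sg K m).
Local Notation XX := (@X K m).

Definition Ppoly : 'M[R]_(gdim m) := \matrix_(i, j) br K (enum_val i) (enum_val j).
Definition Jpoly (I : finType) (F : I -> R) : 'M[R]_(#|I|, gdim m) :=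
  \matrix_(i, j) mderiv j (F (enum_val i)).

Lemma JP0 (I : finType) (F : I -> R) : (forall o, casimir (F o)) -> Jpoly F *m Ppoly = 0.
Proof.
move=> cF; apply/matrixP => i j; rewrite !mxE.
have h := cF (enum_val i) (enum_val j); rewrite pbrX in h.
apply: (etrans _ h); rewrite /Dx.
rewrite (reindex (@enum_rank (gb m))) /=; last first.
  by apply: onW_bij; exact: enum_rank_bij.
by apply: eq_bigr => a _; rewrite !mxE enum_rankK.
Qed.

Definition Sx := (bool + ('I_m + 'I_m))%type.
Definition emb (s : Sx) : gb m :=
  match s with
  | inl false => Gxm | inl true => Gxp
  | inr (inl i) => Gym i | inr (inr i) => Gyp i end.
Definition partner (s : Sx) : Sx :=
  match s with
  | inl b => inl (~~ b)
  | inr (inl i) => inr (inr i) | inr (inr i) => inr (inl i) end.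
Definition sgn (s : Sx) : K :=
  match s with
  | inl false => -1 | inl true => 1
  | inr (inl _) => -1 | inr (inr _) => 1 end.

Definition v1 (k : 'I_(gdim m)) : K :=
  match enum_val (k : 'I_#|{: gb m}|) with
  | Gz z => if (sval z).1 == (sval z).2 then 1 else 0
  | Gh => 1
  | _ => 0
  end.

Lemma zof_if (a b : 'I_m) :
  (if (sval (zof a b)).1 == (sval (zof a b)).2 then (1:K) else 0) = (a == b)%:R.
Proof. by rewrite /=; case: leqP => _ /=; [|rewrite eq_sym]; case: eqP. Qed.

Lemma key (s t : Sx) : (br K (emb s) (emb (partner t))).@[v1] * sgn t = (s == t)%:R.
Proof.
case: s => [[]|[i|i]]; case: t => [[]|[j|j]] /=.
all: rewrite ?meval0 ?mul0r // ?mevalN /X /v1.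
all: try rewrite mevalXU enum_rankK /=.
all: rewrite ?mulr1 ?mulrN1 ?opprK ?oppr0 //.
- by have := zof_if j i; rewrite /= => ->; rewrite eq_sym.
- by have := zof_if i j; rewrite /= => ->.
Qed.

Lemma sel_l (T : finType) (e : T) (G : 'I_#|{: T}| -> K) :
  \sum_(j < #|{: T}|) (enum_val j == e)%:R * G j = G (enum_rank e).
Proof.
under eq_bigr => j _ do rewrite -{1}(enum_rankK e) (inj_eq enum_val_inj) eq_sym.
exact: sum_delta_l.
Qed.
Lemma sel_r (T : finType) (e : T) (c : K) (G : 'I_#|{: T}| -> K) :
  \sum_(j < #|{: T}|) G j * ((enum_val j == e)%:R * c) = G (enum_rank e) * c.
Proof.
under eq_bigr => j _ do rewrite -{1}(enum_rankK e) (inj_eq enum_val_inj) mulrCA mulrC.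
by rewrite sum_delta_r.
Qed.

Lemma rankP1 : (#|{: Sx}| <= \rank (map_mx (meval v1) Ppoly))%N.
Proof.
pose Lm : 'M[K]_(#|{: Sx}|, gdim m) := \matrix_(i, j) (enum_val j == emb (enum_val i))%:R.
pose Rm : 'M[K]_(gdim m, #|{: Sx}|) :=
  \matrix_(j, k) ((enum_val j == emb (partner (enum_val k)))%:R * sgn (enum_val k)).
have LP : forall i j', (Lm *m map_mx (meval v1) Ppoly) i j' = (br K (emb (enum_val i)) (enum_val j')).@[v1].
  move=> i j'; rewrite mxE; under eq_bigr => j _ do rewrite !mxE.
  by rewrite sel_l enum_rankK.
have e : Lm *m map_mx (meval v1) Ppoly *m Rm = 1%:M.
  apply/matrixP => i k; rewrite mxE.
  under eq_bigr => j' _ do rewrite LP mxE.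
  by rewrite sel_r enum_rankK key mxE (inj_eq enum_val_inj).
rewrite -{1}(mxrank1 K #|{: Sx}|) -e.
apply: leq_trans (mxrankM_maxl _ _) _; exact: mxrankM_maxr.
Qed.

End H.


Lemma card_gb m : #|{: gb m}| = (3 + (m + m) + #|{: zidx m}|)%N.
Proof.
have bij : bijective (@gb_enc m).
  exists (@gb_dec m); first exact: gb_encK.
  by case => [[[[[]|[]]|[]]|[i|i]]|z].
by rewrite (bij_eq_card bij) !card_sum !card_unit !card_ord.
Qed.

Unset Implicit Arguments.
Set Strict Implicit.
Theorem theorem4p3 (K : numFieldType) (n : nat) (hn : (2 <= n)%N) :
  let m := (n - 2)%N in
  (* the z_{i,j} and C_n are Casimir elements *)
  (forall z : zidx m, casimir (X K (Gz z))) /\ casimir (Cn K m) /\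
  (* they are functionally independent *)
  func_indep (@casimir_family K m) /\
  (* and every Casimir element is functionally dependent on them *)
  (forall C : Sg K m, casimir C -> ~ func_indep (extend_family C)).
Proof.
move=> m; split; first exact: casimir_z.
split; first exact: casimir_Cn.
split; first exact: indep.
move=> C cC [v0 rf].
set F := extend_family C.
have cF : forall o, casimir (F o).
  by case => [[z|]|] /=; [exact: casimir_z|exact: casimir_Cn|exact: cC].
have J0 : jacobian F v0 = map_mx (meval v0) (Jpoly F) by apply/matrixP => i j; rewrite !mxE.
have h1 := rank_spec (Jpoly F) v0; rewrite -J0 (eqP rf) in h1.
have h2 := leq_trans (rankP1 K m) (rank_spec (Ppoly K m) (@v1 K m)).
have h3 := mxrank_mul_min (map_mx (@FracField.tofrac _) (Jpoly F))
                          (map_mx (@FracField.tofrac _) (Ppoly K m)).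
rewrite -map_mxM JP0 // map_mx0 mxrank0 in h3.
have c1 : #|{: option (option (zidx m))}| = (#|{: zidx m}| + 2)%N by rewrite !card_option addn2.
have c2 : #|{: Sx m}| = (2 + (m + m))%N by rewrite /Sx !card_sum card_bool !card_ord.
have c3 := card_gb m.
move: h1 h2 h3.
move: (\rank (map_mx _ (Jpoly F))) => r1.
move: (\rank (map_mx _ (Ppoly K m))) => r2.
rewrite c1 c2 /gdim c3.
lia.
Qed.
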